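(* Let $\gamma\in\,]0,+\infty[$ and let $h\colon\mathbb{R}\to\mathbb{R}\colon v\mapsto\log(1+\exp(-v))$. Then for every $v\in\mathbb{R}$, $$\mathrm{prox}_{\gamma h}(v)=v+\mathrm{W}_{\exp(-v)}\big(\gamma\exp(-v)\big).$$
   Context: For a convex function $\psi\colon\mathbb{R}\to\mathbb{R}$, $\mathrm{prox}_\psi(v)$ is the unique minimizer over $p\in\mathbb{R}$ of $\frac12(p-v)^2+\psi(p)$. Generalized Lambert W function: for $r\in\,]0,+\infty[$ and $x\in\,]0,+\infty[$, $\mathrm{W}_r(x)$ denotes the unique real number $\bar v$ such that $\bar v(\exp(\bar v)+r)=x$ (this solution is positive; it is the branch of the generalized Lambert function taking nonnegative values, which is strictly increasing). *)

(* Defs.v *)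
From Stdlib Require Import Reals Lra ClassicalEpsilon.
Open Scope R_scope.

(* p is the proximal point of psi at v: p minimizes q |-> 1/2 (q - v)^2 + psi q.
   prox_psi(v) is defined in the paper as the unique such minimizer. *)
Definition is_prox (psi : R -> R) (v p : R) : Prop :=
  forall q : R, / 2 * (p - v) ^ 2 + psi p <= / 2 * (q - v) ^ 2 + psi q.

(* Generalized Lambert W function: W_r(x) is the (unique, for r > 0, x > 0)
   real number w such that w (exp w + r) = x. *)
Definition genW (r x : R) : R :=
  epsilon (inhabits 0) (fun w : R => w * (exp w + r) = x).

Definition h (v : R) : R := ln (1 + exp (- v)).

(* Main.v *)
Require Import Defs.
From Stdlib Require Import Reals Lra ClassicalEpsilon.
From Coquelicot Require Import Coquelicot.
Open Scope R_scope.

Lemma genW_spec (r x : R) : 0 < r -> 0 < x -> genW r x * (exp (genW r x) + r) = x.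
Proof.
  intros Hr Hx. unfold genW. apply epsilon_spec.
  set (g := fun w => w * (exp w + r) - x).
  assert (Hc : continuity g).
  { unfold g. apply derivable_continuous. reg. }
  destruct (IVT g 0 x Hc Hx) as [z [_ Hz]].
  - unfold g. rewrite exp_0. lra.
  - unfold g. assert (1 < exp x) by (rewrite <- exp_0; apply exp_increasing; lra).
    nra.
  - exists z. unfold g in Hz. lra.
Qed.

Section S.
Variables (gamma v : R).
Definition F q := / 2 * (q - v) ^ 2 + gamma * h q.
Definition F' q := q - v - gamma * (exp (- q) / (1 + exp (- q))).

Lemma F_der c : derivable_pt_lim F c (F' c).
Proof.
  apply is_derive_Reals. unfold F, F', h.
  auto_derive.
  - pose proof (exp_pos (-c)). lra.
  - field. pose proof (exp_pos (-c)). lra.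
Qed.

Lemma F'_mono a b : 0 < gamma -> a < b -> F' a < F' b.
Proof.
  intros Hg Hab. unfold F'.
  assert (Heab : exp (- b) < exp (- a)) by (apply exp_increasing; lra).
  pose proof (exp_pos (-a)). pose proof (exp_pos (-b)).
  assert (exp (- b) / (1 + exp (- b)) <= exp (- a) / (1 + exp (- a))).
  { unfold Rdiv. apply (Rmult_le_reg_r ((1 + exp (-a)) * (1 + exp (-b)))).
    nra. field_simplify; lra. }
  nra.
Qed.

Lemma F_strict p0 q : 0 < gamma -> F' p0 = 0 -> q <> p0 -> F p0 < F q.
Proof.
  intros Hg H0 Hq.
  destruct (Rlt_or_le q p0) as [Hl | Hl].
  - destruct (MVT_cor2 F F' q p0 Hl (fun c _ => F_der c)) as [c [Hc Hc2]].
    assert (F' c < F' p0) by (apply F'_mono; lra). nra.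
  - assert (Hl' : p0 < q) by lra.
    destruct (MVT_cor2 F F' p0 q Hl' (fun c _ => F_der c)) as [c [Hc Hc2]].
    assert (F' p0 < F' c) by (apply F'_mono; lra). nra.
Qed.
End S.

Theorem proposition2 (gamma : R) (hgamma : 0 < gamma) (v : R) :
  forall p : R,
    is_prox (fun x => gamma * h x) v p <->
    p = v + genW (exp (- v)) (gamma * exp (- v)).
Proof.
  intros p.
  set (r := exp (- v)).
  assert (Hr : 0 < r) by apply exp_pos.
  set (w := genW r (gamma * r)).
  assert (Hw : w * (exp w + r) = gamma * r) by (apply genW_spec; nra).
  set (p0 := v + w).
  assert (HF0 : F' gamma v p0 = 0).
  { unfold F'. unfold p0.
    replace (- (v + w)) with (- v + - w) by ring.
    rewrite exp_plus. fold r. rewrite exp_Ropp.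
    pose proof (exp_pos w).
    apply (Rmult_eq_reg_r (exp w + r)); [| lra].
    field_simplify; try lra. }
  split.
  - intros Hp. destruct (Req_dec p p0) as [E|E]; [exact E|].
    exfalso. pose proof (F_strict gamma v p0 p hgamma HF0 E).
    specialize (Hp p0). unfold F in *. lra.
  - intros ->. fold r. fold w. fold p0. intros q.
    destruct (Req_dec q p0) as [->|E]; [lra|].
    pose proof (F_strict gamma v p0 q hgamma HF0 E). unfold F in *. lra.
Qed.
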